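(* Consider the following model. A principal P and an agent A interact over two periods $t\in\{1,2\}$. States $\omega_t\in\{0,1\}$ satisfy $\Pr[\omega_1=1]=\mu_0\in(0,1)$ and $\Pr[\omega_2=\omega\mid\omega_1=\omega]=\rho\in(1/2,1)$. In each period A chooses $e_t\in\{0,1\}$; if $e_t=1$ he observes $\omega_t$, and here if $e_t=0$ he observes nothing (i.e., the free-revelation probability is $\pi=0$). A reports $r_t\in\{\varnothing,\omega_t\}$ if he observed $\omega_t$, else $r_t=\varnothing$. P chooses $x=\hat x(r_1,r_2)$ at the end of period 2. Payoffs: P gets $\mathbb{1}[x=\omega_2]-k(e_1+e_2)$, A gets $x-c(e_1+e_2)$, $c,k>0$; A best-responds, following the recommendation and disclosing when indifferent. Let $\kappa=k/(1-\pi)=k$, $\gamma=c/(1-\pi)=c$, $\mu_2(\varnothing)=\rho\mu_0+(1-\rho)(1-\mu_0)$, and assume $\kappa\in(1-\rho,\min\{\mu_2(\varnothing),1-\mu_2(\varnothing)\}]$ and $\gamma\le\mu_2(\varnothing)$. Then the mechanism with $\sigma_1=0$, $\sigma_2(r_1)=\mathbb{1}[r_1=\varnothing]$ and $\hat x(r_1,r_2)=\mathbb{1}[r_1=\varnothing]\mathbb{1}[r_2=1]$ generates the same outcomes as the baseline mechanism, and therefore it is optimal.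
   Context: The baseline mechanism is the one P would choose if she controlled testing directly and observed all results: for this range of $\kappa$ it does not test in period 1, tests in period 2 when no period-1 result was obtained, and assigns efficiently ($x=1$ iff the posterior probability of $\omega_2=1$ is at least $1/2$); with $\pi=0$ it therefore tests only in period 2 and sets $x=\omega_2$. *)

(* Defs.v *)
From Stdlib Require Import Reals Lra Bool.
Open Scope R_scope.

(* Two-period testing model with free-revelation probability pi = 0.
   Reports: None = the empty report (varnothing), Some w = report of state w. *)

Definition b2R (b : bool) : R := if b then 1 else 0.

Definition sumb (f : bool -> R) : R := f true + f false.

Definition bern (p : R) (b : bool) : R := if b then p else 1 - p.

Definition pstate (mu0 rho : R) (w1 w2 : bool) : R :=
  bern mu0 w1 * (if Bool.eqb w2 w1 then rho else 1 - rho).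

Definition mu2_empty (mu0 rho : R) : R := rho * mu0 + (1 - rho) * (1 - mu0).

(* A mechanism: sigma_1 = prob. of recommending a test in period 1,
   sigma_2(r1) = prob. of recommending a test in period 2 given report r1,
   xhat(r1, r2) = decision. *)
Record mech := Mech {
  sig1 : R;
  sig2 : option bool -> R;
  xhat : option bool -> option bool -> bool }.

Definition valid_mech (M : mech) : Prop :=
  0 <= sig1 M <= 1 /\ forall r, 0 <= sig2 M r <= 1.

(* A (pure) strategy of the agent.
   eff1 rec1                 : effort in period 1 given recommendation rec1
   disc1 rec1 w1             : whether to disclose the observed w1
   eff2 rec1 o1 rec2         : effort in period 2 (o1 = observation of period 1)
   disc2 rec1 o1 rec2 w2     : whether to disclose the observed w2 *)
Record strat := Strat {
  eff1 : bool -> bool;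
  disc1 : bool -> bool -> bool;
  eff2 : bool -> option bool -> bool -> bool;
  disc2 : bool -> option bool -> bool -> bool -> bool }.

Section Play.
Variables (M : mech) (s : strat).

Definition obs1 (w1 rec1 : bool) : option bool :=
  if eff1 s rec1 then Some w1 else None.

Definition rep1 (w1 rec1 : bool) : option bool :=
  match obs1 w1 rec1 with
  | Some w => if disc1 s rec1 w then Some w else None
  | None => None
  end.

Definition e2v (w1 rec1 rec2 : bool) : bool := eff2 s rec1 (obs1 w1 rec1) rec2.

Definition rep2 (w1 w2 rec1 rec2 : bool) : option bool :=
  if e2v w1 rec1 rec2 then
    (if disc2 s rec1 (obs1 w1 rec1) rec2 w2 then Some w2 else None)
  else None.

Definition xout (w1 w2 rec1 rec2 : bool) : bool :=
  xhat M (rep1 w1 rec1) (rep2 w1 w2 rec1 rec2).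

Definition pw (mu0 rho : R) (w1 w2 rec1 rec2 : bool) : R :=
  pstate mu0 rho w1 w2 * bern (sig1 M) rec1 * bern (sig2 M (rep1 w1 rec1)) rec2.

Definition expect (mu0 rho : R) (f : bool -> bool -> bool -> bool -> R) : R :=
  sumb (fun w1 => sumb (fun w2 => sumb (fun rec1 => sumb (fun rec2 =>
    pw mu0 rho w1 w2 rec1 rec2 * f w1 w2 rec1 rec2)))).

Definition UA (mu0 rho c : R) : R :=
  expect mu0 rho (fun w1 w2 rec1 rec2 =>
    b2R (xout w1 w2 rec1 rec2)
    - c * (b2R (eff1 s rec1) + b2R (e2v w1 rec1 rec2))).

Definition UP (mu0 rho k : R) : R :=
  expect mu0 rho (fun w1 w2 rec1 rec2 =>
    b2R (Bool.eqb (xout w1 w2 rec1 rec2) w2)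
    - k * (b2R (eff1 s rec1) + b2R (e2v w1 rec1 rec2))).

Definition outcome_prob (mu0 rho : R) (a1 a2 a3 a4 a5 : bool) : R :=
  expect mu0 rho (fun w1 w2 rec1 rec2 =>
    b2R (Bool.eqb w1 a1 && Bool.eqb w2 a2 && Bool.eqb (eff1 s rec1) a3 &&
         Bool.eqb (e2v w1 rec1 rec2) a4 && Bool.eqb (xout w1 w2 rec1 rec2) a5)%bool).

End Play.

Definition best_response (mu0 rho c : R) (M : mech) (s : strat) : Prop :=
  forall s' : strat, UA M s' mu0 rho c <= UA M s mu0 rho c.

Definition baseline_outcome_prob (mu0 rho : R) (w1 w2 e1 e2 x : bool) : R :=
  pstate mu0 rho w1 w2 * b2R (negb e1 && e2 && Bool.eqb x w2)%bool.

Definition Mstar : mech :=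
  Mech 0 (fun r1 => b2R (match r1 with None => true | Some _ => false end))
       (fun r1 r2 => (match r1 with None => true | Some _ => false end) &&
                     (match r2 with Some true => true | _ => false end)).

Definition s_obedient : strat :=
  Strat (fun rec1 => rec1) (fun _ _ => true) (fun _ _ rec2 => rec2)
        (fun _ _ _ _ => true).

(* Main.v *)
Require Import Defs.
From Stdlib Require Import Reals Lra Psatz.
Open Scope R_scope.

Definition Pc (rho : R) (w1 w2 : bool) : R := if Bool.eqb w2 w1 then rho else 1 - rho.

Lemma sumb_bern_le p g B : 0 <= p <= 1 -> (forall b, g b <= B) ->
  sumb (fun b => bern p b * g b) <= B.
Proof. intros Hp Hg. unfold sumb, bern. pose proof (Hg true); pose proof (Hg false). nra. Qed.

Lemma sumb_bern_mono p g h : 0 <= p <= 1 -> (forall b, g b <= h b) ->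
  sumb (fun b => bern p b * g b) <= sumb (fun b => bern p b * h b).
Proof. intros Hp Hg. unfold sumb, bern. pose proof (Hg true); pose proof (Hg false). nra. Qed.

Lemma Pc_sum_le rho w1 g B : 0 <= rho <= 1 -> (forall b, g b <= B) ->
  sumb (fun b => Pc rho w1 b * g b) <= B.
Proof. intros Hp Hg. unfold sumb, Pc. pose proof (Hg true); pose proof (Hg false).
  destruct w1; cbv [Bool.eqb]; nra. Qed.

Lemma Pc_mono rho w1 g h : 0 <= rho <= 1 -> (forall b, g b <= h b) ->
  sumb (fun b => Pc rho w1 b * g b) <= sumb (fun b => Pc rho w1 b * h b).
Proof. intros Hp Hg. unfold sumb, Pc. pose proof (Hg true); pose proof (Hg false).
  destruct w1; cbv [Bool.eqb]; nra. Qed.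

Lemma bern0 g : sumb (fun b => bern 0 b * g b) = g false.
Proof. unfold sumb, bern. ring. Qed.
Lemma bern1 p g : p = 1 -> sumb (fun b => bern p b * g b) = g true.
Proof. intros ->. unfold sumb, bern. ring. Qed.

Lemma expect_nested M s mu0 rho f : expect M s mu0 rho f =
  sumb (fun rec1 => bern (sig1 M) rec1 * sumb (fun w1 => bern mu0 w1 *
    sumb (fun rec2 => bern (sig2 M (rep1 s w1 rec1)) rec2 *
      sumb (fun w2 => Pc rho w1 w2 * f w1 w2 rec1 rec2)))).
Proof. unfold expect, pw, pstate, Pc, sumb. cbv beta. ring. Qed.

Lemma swap_eq (a : bool -> R) (r : bool -> option bool) (Q : option bool -> R)
  (F : bool -> bool -> bool -> R) r0 : r true = r0 -> r false = r0 ->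
  sumb (fun w1 => a w1 * sumb (fun rec2 => bern (Q (r w1)) rec2 * sumb (fun w2 => F w1 rec2 w2)))
  = sumb (fun rec2 => bern (Q r0) rec2 * sumb (fun w1 => a w1 * sumb (fun w2 => F w1 rec2 w2))).
Proof. intros H1 H2. unfold sumb. rewrite H1, H2. ring. Qed.

Lemma xout_none M s w1 w2 rec1 rec2 : e2v s w1 rec1 rec2 = false ->
  xout M s w1 w2 rec1 rec2 = xhat M (rep1 s w1 rec1) None.
Proof. intros H. unfold xout, rep2. rewrite H. reflexivity. Qed.

Lemma rep1_none s w1 rec1 : eff1 s rec1 = false -> rep1 s w1 rec1 = None.
Proof. intros H. unfold rep1, obs1. rewrite H. reflexivity. Qed.

Lemma e2v_none s w1 rec1 rec2 : eff1 s rec1 = false -> e2v s w1 rec1 rec2 = eff2 s rec1 None rec2.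
Proof. intros H. unfold e2v, obs1. rewrite H. reflexivity. Qed.

Lemma UP_le M s mu0 rho k : 0 < mu0 < 1 -> / 2 < rho < 1 -> 0 < k ->
  k <= mu2_empty mu0 rho -> k <= 1 - mu2_empty mu0 rho -> valid_mech M ->
  UP M s mu0 rho k <= 1 - k.
Proof.
  intros Hm Hr Hk Hk1 Hk2 [Hs1 Hs2]. unfold mu2_empty in *.
  unfold UP. rewrite expect_nested.
  apply sumb_bern_le; [lra|]. intro rec1.
  destruct (eff1 s rec1) eqn:E.
  - apply sumb_bern_le; [lra|]. intro w1. apply sumb_bern_le; [apply Hs2|]. intro rec2.
    destruct (e2v s w1 rec1 rec2) eqn:E2.
    + apply Pc_sum_le; [lra|]. intro w2. cbv beta. rewrite ?E, ?E2. unfold b2R.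
      destruct (Bool.eqb _ _); lra.
    + unfold sumb. cbv beta.
      rewrite (xout_none M s w1 true rec1 rec2 E2), (xout_none M s w1 false rec1 rec2 E2); rewrite ?E, ?E2.
      destruct (xhat M (rep1 s w1 rec1) None); destruct w1; unfold Pc, b2R; cbv [Bool.eqb]; lra.
  - rewrite (swap_eq (bern mu0) (fun w1 => rep1 s w1 rec1) (sig2 M) _ None
              (rep1_none s true rec1 E) (rep1_none s false rec1 E)).
    apply sumb_bern_le; [apply Hs2|]. intro rec2.
    destruct (eff2 s rec1 None rec2) eqn:E2.
    + apply sumb_bern_le; [lra|]. intro w1. apply Pc_sum_le; [lra|]. intro w2.
      cbv beta. rewrite (e2v_none s w1 rec1 rec2 E); rewrite ?E, ?E2. unfold b2R.
      destruct (Bool.eqb _ _); lra.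
    + assert (Hn : forall w1, e2v s w1 rec1 rec2 = false)
        by (intro w1; rewrite (e2v_none s w1 rec1 rec2 E); exact E2).
      unfold sumb. cbv beta.
      rewrite !(xout_none M s _ _ rec1 rec2 (Hn _)), !(rep1_none s _ rec1 E); rewrite ?E, ?Hn.
      destruct (xhat M None None); unfold Pc, b2R; cbv [Bool.eqb]; unfold bern; nra.
Qed.

Lemma UA_le s mu0 rho c : 0 < mu0 < 1 -> / 2 < rho < 1 -> 0 < c ->
  c <= mu2_empty mu0 rho -> UA Mstar s mu0 rho c <= mu2_empty mu0 rho - c.
Proof.
  intros Hm Hr Hc Hc1. unfold mu2_empty in *.
  unfold UA. rewrite expect_nested. change (sig1 Mstar) with 0. rewrite bern0.
  destruct (eff1 s false) eqn:E.
  - apply Rle_trans with (sumb (fun w1 => bern mu0 w1 * (Pc rho w1 true - c))).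
    + apply sumb_bern_mono; [lra|]. intro w1. cbv beta.
      destruct (disc1 s false w1) eqn:D.
      * assert (Hr1 : rep1 s w1 false = Some w1) by (unfold rep1, obs1; rewrite E, D; reflexivity).
        rewrite Hr1. change (sig2 Mstar (Some w1)) with 0. rewrite bern0.
        apply Rle_trans with (-c).
        -- apply Pc_sum_le; [lra|]. intro w2. cbv beta. rewrite ?E.
           unfold xout. rewrite Hr1. cbv [xhat Mstar b2R andb]. destruct (e2v s w1 false false); lra.
        -- unfold Pc; destruct (Bool.eqb _ _); lra.
      * assert (Hr1 : rep1 s w1 false = None) by (unfold rep1, obs1; rewrite E, D; reflexivity).
        rewrite Hr1. rewrite bern1 by reflexivity.
        destruct (e2v s w1 false true) eqn:E2.
        -- assert (Hx : xout Mstar s w1 false false true = false).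
           { unfold xout, rep2. rewrite Hr1, E2. cbv [xhat Mstar andb]. destruct (disc2 _ _ _ _ _); reflexivity. }
           unfold sumb. cbv beta. rewrite Hx; rewrite ?E, ?E2.
           destruct (xout Mstar s w1 true false true); destruct w1; unfold Pc, b2R; cbv [Bool.eqb]; lra.
        -- unfold sumb. cbv beta.
           rewrite !(xout_none Mstar s w1 _ false true E2), Hr1; rewrite ?E, ?E2.
           cbv [xhat Mstar andb]. destruct w1; unfold Pc, b2R; cbv [Bool.eqb]; lra.
    + unfold sumb, Pc, bern. cbv [Bool.eqb]. lra.
  - rewrite (swap_eq (bern mu0) (fun w1 => rep1 s w1 false) (sig2 Mstar) _ None
              (rep1_none s true false E) (rep1_none s false false E)).
    rewrite bern1 by reflexivity.
    destruct (eff2 s false None true) eqn:E2.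
    + apply Rle_trans with (sumb (fun w1 => bern mu0 w1 * sumb (fun w2 => Pc rho w1 w2 * (b2R w2 - c)))).
      * apply sumb_bern_mono; [lra|]. intro w1. apply Pc_mono; [lra|]. intro w2. cbv beta.
        rewrite ?(e2v_none s w1 false true E), ?E, ?E2.
        unfold xout, rep2. rewrite ?(e2v_none s w1 false true E), ?E2, ?(rep1_none s w1 false E).
        cbv [xhat Mstar andb]. destruct (disc2 _ _ _ _ _); destruct w2; unfold b2R; cbv [Bool.eqb]; lra.
      * unfold sumb, Pc, bern, b2R. cbv [Bool.eqb]. lra.
    + assert (Hn : forall w1, e2v s w1 false true = false)
        by (intro w1; rewrite (e2v_none s w1 false true E); exact E2).
      unfold sumb. cbv beta.
      rewrite !(xout_none Mstar s _ _ false true (Hn _)), !(rep1_none s _ false E); rewrite ?E, ?Hn.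
      cbv [xhat Mstar andb]. unfold Pc, b2R, bern; cbv [Bool.eqb]; nra.
Qed.

Ltac unf := cbv beta iota delta [UP UA expect sumb pw pstate bern b2R xout rep1 rep2 obs1 e2v
  Mstar s_obedient sig1 sig2 xhat eff1 eff2 disc1 disc2 Bool.eqb negb andb
  outcome_prob baseline_outcome_prob mu2_empty].

Lemma UA_ob mu0 rho c : UA Mstar s_obedient mu0 rho c = mu2_empty mu0 rho - c.
Proof. unf. ring. Qed.
Lemma UP_ob mu0 rho k : UP Mstar s_obedient mu0 rho k = 1 - k.
Proof. unf. ring. Qed.

Theorem lemmaC2 (mu0 rho c k : R) :
  0 < mu0 < 1 -> / 2 < rho < 1 -> 0 < c -> 0 < k ->
  1 - rho < k -> k <= Rmin (mu2_empty mu0 rho) (1 - mu2_empty mu0 rho) ->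
  c <= mu2_empty mu0 rho ->
  valid_mech Mstar /\
  best_response mu0 rho c Mstar s_obedient /\
  (forall w1 w2 e1 e2 x : bool,
      outcome_prob Mstar s_obedient mu0 rho w1 w2 e1 e2 x
      = baseline_outcome_prob mu0 rho w1 w2 e1 e2 x) /\
  (forall (M : mech) (s : strat), valid_mech M -> best_response mu0 rho c M s ->
      UP M s mu0 rho k <= UP Mstar s_obedient mu0 rho k).
Proof.
  intros Hm Hr Hc Hk Hk0 Hk1 Hc1.
  assert (Hk2 : k <= mu2_empty mu0 rho) by (eapply Rle_trans; [exact Hk1| apply Rmin_l]).
  assert (Hk3 : k <= 1 - mu2_empty mu0 rho) by (eapply Rle_trans; [exact Hk1| apply Rmin_r]).
  split; [|split; [|split]].
  - split; cbv [Mstar sig1 sig2 b2R]; [lra|]. intros [r|]; lra.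
  - intro s'. rewrite UA_ob. apply UA_le; assumption.
  - intros w1 w2 e1 e2 x. destruct w1, w2, e1, e2, x; unf; ring.
  - intros M s HM _. rewrite UP_ob. apply UP_le; assumption.
Qed.
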